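(* Let $S_2^*=(-y+x^3-xy^2)\frac{\partial}{\partial x}+(x+x^2y-y^3)\frac{\partial}{\partial y}$ and $H_{2*}(x,y)=\frac{x^2+y^2}{1+2xy}$. For $\epsilon\neq0$ let $\Phi_{2*,\epsilon}(\mathbf{x})=\mathbf{x}+2\epsilon\left(I-\epsilon\,\mathrm{D}S_2^*(\mathbf{x})\right)^{-1}S_2^*(\mathbf{x})$. Let $L_{2*}(x,y)=\left(\frac{x}{\sqrt{1+2xy}},\frac{y}{\sqrt{1+2xy}}\right)$, let $\Phi_{L,\epsilon}(u,v)=\left(\frac{(1-\epsilon^2)u-2\epsilon v}{1+\epsilon^2},\frac{2\epsilon u+(1-\epsilon^2)v}{1+\epsilon^2}\right)$, and let $\widetilde{\Phi}_{2*,\epsilon}=L_{2*}^{-1}\circ\Phi_{L,\epsilon}\circ L_{2*}$, explicitly $$\widetilde{\Phi}_{2*,\epsilon}(x,y)=\left(-\frac{((\epsilon^{2}-1)x+2\epsilon y)\,G}{(\epsilon^{2}+1)\sqrt{2xy+1}},\ \frac{(2\epsilon x+(1-\epsilon^{2})y)\,G}{(\epsilon^{2}+1)\sqrt{2xy+1}}\right),$$ $G=\sqrt{\frac{(2xy+1)(\epsilon^{2}+1)^{2}}{4\epsilon(\epsilon^{2}-1)x^{2}+16\epsilon^{2}xy-4\epsilon(\epsilon^{2}-1)y^{2}+(\epsilon^{2}+1)^{2}}}$. Then: (a) $H_{2*}$ is a first integral of $\Phi_{2*,\epsilon}$, but $S_2^*$ is not a Lie symmetry of $\Phi_{2*,\epsilon}$;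 (b) $H_{2*}$ is a first integral of $\widetilde{\Phi}_{2*,\epsilon}$, and $S_2^*$ is a Lie symmetry of $\widetilde{\Phi}_{2*,\epsilon}$.
   Context: $\mathrm{D}S_2^*$ is the Jacobian matrix of $S_2^*$. $S_2^*$ has an isochronous center at the origin and $L_{2*}$ is a linearization conjugating it near the origin with $-v\frac{\partial}{\partial u}+u\frac{\partial}{\partial v}$; $L_{2*}^{-1}$ is its local inverse. $H$ is a first integral of a map $F$ if $H\circ F=H$; a vector field $X$ is a Lie symmetry of $F$ if $X(F(\mathbf{x}))=DF(\mathbf{x})X(\mathbf{x})$. *)

(* Defs.v *)
From Stdlib Require Import Reals.
From Coquelicot Require Import Coquelicot.
Open Scope R_scope.

Definition pt := (R * R)%type.

(* Jacobian matrix DF(p) of F : R^2 -> R^2, stored row-wise: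
   ((dF1/dx, dF1/dy), (dF2/dx, dF2/dy)), via Coquelicot partial derivatives. *)
Definition jac (F : pt -> pt) (p : pt) : (R * R) * (R * R) :=
  let (x, y) := p in
  ((Derive (fun t => fst (F (t, y))) x, Derive (fun t => fst (F (x, t))) y),
   (Derive (fun t => snd (F (t, y))) x, Derive (fun t => snd (F (x, t))) y)).

Definition mat_vec (M : (R * R) * (R * R)) (v : pt) : pt :=
  let '((a, b), (c, d)) := M in let (v1, v2) := v in
  (a * v1 + b * v2, c * v1 + d * v2).

Definition first_integral_on (D : pt -> Prop) (H : pt -> R) (F : pt -> pt) : Prop :=
  forall p, D p -> H (F p) = H p.

Definition lie_symmetry_at (X F : pt -> pt) (p : pt) : Prop :=
  X (F p) = mat_vec (jac F p) (X p).

Definition lie_symmetry_on (D : pt -> Prop) (X F : pt -> pt) : Prop :=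
  forall p, D p -> lie_symmetry_at X F p.

Definition S2 (p : pt) : pt :=
  let (x, y) := p in (- y + x ^ 3 - x * y ^ 2, x + x ^ 2 * y - y ^ 3).

Definition H2 (p : pt) : R :=
  let (x, y) := p in (x ^ 2 + y ^ 2) / (1 + 2 * x * y).

Definition det_Phi2 (eps : R) (p : pt) : R :=
  let '((a, b), (c, d)) := jac S2 p in
  (1 - eps * a) * (1 - eps * d) - (eps * b) * (eps * c).

(* Phi_{2*,eps}(p) = p + 2 eps (I - eps DS_2^*(p))^{-1} S_2^*(p),
   the 2x2 inverse written via the adjugate (meaningful where det_Phi2 <> 0). *)
Definition Phi2 (eps : R) (p : pt) : pt :=
  let '((a, b), (c, d)) := jac S2 p in
  let m11 := 1 - eps * a in let m12 := - (eps * b) in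
  let m21 := - (eps * c) in let m22 := 1 - eps * d in
  let dt := m11 * m22 - m12 * m21 in
  let (s1, s2) := S2 p in
  let (x, y) := p in
  (x + 2 * eps * ((m22 * s1 - m12 * s2) / dt),
   y + 2 * eps * ((- m21 * s1 + m11 * s2) / dt)).

Definition dom_Phi2 (eps : R) (p : pt) : Prop :=
  det_Phi2 eps p <> 0 /\ 1 + 2 * fst p * snd p <> 0 /\
  1 + 2 * fst (Phi2 eps p) * snd (Phi2 eps p) <> 0.

Definition L2 (p : pt) : pt :=
  let (x, y) := p in (x / sqrt (1 + 2 * x * y), y / sqrt (1 + 2 * x * y)).

Definition PhiL (eps : R) (p : pt) : pt :=
  let (u, v) := p in
  (((1 - eps ^ 2) * u - 2 * eps * v) / (1 + eps ^ 2),
   (2 * eps * u + (1 - eps ^ 2) * v) / (1 + eps ^ 2)).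

Definition Dtilde (eps : R) (p : pt) : R :=
  let (x, y) := p in
  4 * eps * (eps ^ 2 - 1) * x ^ 2 + 16 * eps ^ 2 * x * y
  - 4 * eps * (eps ^ 2 - 1) * y ^ 2 + (eps ^ 2 + 1) ^ 2.

Definition Gtilde (eps : R) (p : pt) : R :=
  let (x, y) := p in
  sqrt ((2 * x * y + 1) * (eps ^ 2 + 1) ^ 2 / Dtilde eps p).

(* The explicit map tilde Phi_{2*,eps} = L_{2*}^{-1} o Phi_{L,eps} o L_{2*}. *)
Definition Phi2t (eps : R) (p : pt) : pt :=
  let (x, y) := p in
  (- (((eps ^ 2 - 1) * x + 2 * eps * y) * Gtilde eps p)
     / ((eps ^ 2 + 1) * sqrt (2 * x * y + 1)),
   ((2 * eps * x + (1 - eps ^ 2) * y) * Gtilde eps p)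
     / ((eps ^ 2 + 1) * sqrt (2 * x * y + 1))).

(* Open domain where the explicit formula is defined (and smooth), and
   where H_{2*} o tilde Phi makes sense. *)
Definition dom_Phi2t (eps : R) (p : pt) : Prop :=
  0 < 1 + 2 * fst p * snd p /\ 0 < Dtilde eps p /\
  1 + 2 * fst (Phi2t eps p) * snd (Phi2t eps p) <> 0.

(* Main.v *)
Require Import Defs.
From Stdlib Require Import Reals Lra Psatz.
From Coquelicot Require Import Coquelicot.
Open Scope R_scope.

Lemma cross A B C E : B <> 0 -> E <> 0 -> A * E = C * B -> A / B = C / E.
Proof.
intros HB HE H. assert (A = C * B / E) by (rewrite <- H; field; auto).
rewrite H0. field; auto.
Qed.

Lemma jacS2 x y : jac S2 (x,y) = ((3*x^2 - y^2, -1 - 2*x*y), (1 + 2*x*y, x^2 - 3*y^2)).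
Proof.
unfold jac, S2. cbn [fst snd].
f_equal; f_equal; apply is_derive_unique; auto_derive; auto; ring.
Qed.

Definition s1 x y := - y + x ^ 3 - x * y ^ 2.
Definition s2 x y := x + x ^ 2 * y - y ^ 3.
Definition m11 e x y := 1 - e * (3*x^2 - y^2).
Definition m12 e x y := - (e * (-1 - 2*x*y)).
Definition m21 e x y := - (e * (1 + 2*x*y)).
Definition m22 e x y := 1 - e * (x^2 - 3*y^2).
Definition dt e x y := m11 e x y * m22 e x y - m12 e x y * m21 e x y.
Definition P1 e x y := x + 2 * e * ((m22 e x y * s1 x y - m12 e x y * s2 x y) / dt e x y).
Definition P2 e x y := y + 2 * e * ((- m21 e x y * s1 x y + m11 e x y * s2 x y) / dt e x y).

Lemma Phi2E e x y : Phi2 e (x,y) = (P1 e x y, P2 e x y).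
Proof. unfold Phi2. rewrite jacS2. reflexivity. Qed.

Lemma detE e x y : det_Phi2 e (x,y) = dt e x y.
Proof. unfold det_Phi2. rewrite jacS2. unfold dt, m11, m12, m21, m22. ring. Qed.

Lemma H2key e x y : dt e x y <> 0 ->
  (P1 e x y ^2 + P2 e x y ^2) * (1 + 2*x*y) = (x^2+y^2) * (1 + 2 * P1 e x y * P2 e x y).
Proof.
intros Hd. unfold P1, P2. unfold dt in *. unfold s1, s2, m11, m12, m21, m22 in *.
field. auto.
Qed.

Lemma parta1 e : first_integral_on (dom_Phi2 e) H2 (Phi2 e).
Proof.
intros [x y] [K1 [K2 K3]]. rewrite detE in K1. cbn [fst snd] in K2.
rewrite Phi2E in *. cbn [fst snd] in K3. unfold H2.
apply cross; auto. apply H2key; auto.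
Qed.

Lemma DU (f : R -> R) x l : is_derive f x l -> Derive f x = l.
Proof. apply is_derive_unique. Qed.

Lemma gb e u a : 0 <= u <= 1 -> 0 <= a -> (e = a \/ e = -a) ->
  Rabs ((2*e-1-3*e^2)*(1+u) + (2*e-e^2)*u^2 - e^2*u^3) <= 8*a^2+6*a+2.
Proof.
intros [H0 H1] Ha He.
assert (0 <= u^2 <= 1) by (split; nra).
assert (0 <= u^3 <= 1) by (split; nra).
apply Rabs_le; destruct He; subst; split; nra.
Qed.

Ltac dtside := let Hc := fresh in intro Hc; match goal with Hd : dt _ _ _ <> 0 |- _ => apply Hd end; unfold dt, m11, m12, m21, m22; match type of Hc with ?X = 0 => transitivity X; [ring | exact Hc] end.

Lemma notlie e t : e <> 0 -> dt e t 0 <> 0 ->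
  (1 - e*t^2) * (1 - t^2) * (2*e + t^2 * ((2*e-1-3*e^2)*(1+t^2) + (2*e-e^2)*(t^2)^2 - e^2*(t^2)^3)) <> 0 ->
  t <> 0 ->
  ~ lie_symmetry_at S2 (Phi2 e) (t,0).
Proof.
intros He Hd Hr Ht Hl. unfold lie_symmetry_at, jac in Hl.
rewrite (Derive_ext (fun s => fst (Phi2 e (s, 0))) (fun s => P1 e s 0)) in Hl by (intro; rewrite Phi2E; reflexivity).
rewrite (Derive_ext (fun s => fst (Phi2 e (t, s))) (fun s => P1 e t s)) in Hl by (intro; rewrite Phi2E; reflexivity).
rewrite (Derive_ext (fun s => snd (Phi2 e (s, 0))) (fun s => P2 e s 0)) in Hl by (intro; rewrite Phi2E; reflexivity).
rewrite (Derive_ext (fun s => snd (Phi2 e (t, s))) (fun s => P2 e t s)) in Hl by (intro; rewrite Phi2E; reflexivity).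
eassert (E11 : is_derive (fun s => P1 e s 0) t ?[lE11]).
{ unfold P1, dt, s1, s2, m11, m12, m21, m22. auto_derive.
  - repeat split; try exact I; dtside.
  - reflexivity. }
rewrite (DU (fun s : R => P1 e s 0) t _ E11) in Hl.
eassert (E12 : is_derive (fun s => P1 e t s) 0 ?[lE12]).
{ unfold P1, dt, s1, s2, m11, m12, m21, m22. auto_derive.
  - repeat split; try exact I; dtside.
  - reflexivity. }
rewrite (DU (fun s : R => P1 e t s) 0 _ E12) in Hl.
eassert (E21 : is_derive (fun s => P2 e s 0) t ?[lE21]).
{ unfold P2, dt, s1, s2, m11, m12, m21, m22. auto_derive.
  - repeat split; try exact I; dtside.
  - reflexivity. }
rewrite (DU (fun s : R => P2 e s 0) t _ E21) in Hl.
eassert (E22 : is_derive (fun s => P2 e t s) 0 ?[lE22]).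
{ unfold P2, dt, s1, s2, m11, m12, m21, m22. auto_derive.
  - repeat split; try exact I; dtside.
  - reflexivity. }
rewrite (DU (fun s : R => P2 e t s) 0 _ E22) in Hl.
rewrite Phi2E in Hl. cbv beta iota zeta delta [S2 mat_vec fst snd] in Hl.
apply (f_equal fst) in Hl. cbv beta iota zeta delta [fst] in Hl.
apply Rminus_diag_eq in Hl.
match type of Hl with ?A = 0 => assert (HA : A = 8*e^3*t^3*((1 - e*t^2) * (1 - t^2) * (2*e + t^2 * ((2*e-1-3*e^2)*(1+t^2) + (2*e-e^2)*(t^2)^2 - e^2*(t^2)^3)))/(dt e t 0)^3) end.
{ unfold P1, P2, s1, s2. unfold dt in Hd. unfold dt, m11, m12, m21, m22 in *. field. let Hc := fresh in intro Hc; apply Hd; match type of Hc with ?X = 0 => transitivity X; [ring | exact Hc] end. }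
rewrite HA in Hl. fold (dt e t 0) in Hl.
unfold Rdiv in Hl. apply Rmult_integral in Hl. destruct Hl as [Hl|Hl].
- apply Rmult_integral in Hl. destruct Hl as [Hl|Hl]; [|exact (Hr Hl)].
  apply Rmult_integral in Hl. destruct Hl as [Hl|Hl].
  + apply Rmult_integral in Hl. destruct Hl as [Hl|Hl]; [lra|]. exact (pow_nonzero e 3 He Hl).
  + exact (pow_nonzero t 3 Ht Hl).
- exact (Rinv_neq_0_compat _ (pow_nonzero _ 3 Hd) Hl).
Qed.


Lemma parta2 e : e <> 0 -> forall delta : R, 0 < delta ->
      exists p : pt, Rabs (fst p) < delta /\ Rabs (snd p) < delta /\
        dom_Phi2 e p /\ ~ lie_symmetry_at S2 (Phi2 e) p.
Proof.
intros He delta Hdel.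
set (a := Rabs e).
assert (Ha : 0 < a) by (apply Rabs_pos_lt; auto).
assert (Hea : e = a \/ e = - a).
{ unfold a; destruct (Rcase_abs e); [right; rewrite Rabs_left; lra | left; rewrite Rabs_right; lra]. }
set (C := 8*a^2+6*a+2).
assert (HC : 0 < C) by (unfold C; nra).
set (t := Rmin (Rmin (1/2) (delta/2)) (a/C)).
assert (Ht0 : 0 < t).
{ unfold t. apply Rmin_pos; [apply Rmin_pos; lra|]. apply Rdiv_lt_0_compat; auto. }
assert (Ht1 : t <= 1/2) by (unfold t; eapply Rle_trans; [apply Rmin_l|apply Rmin_l]).
assert (Ht2 : t <= delta/2) by (unfold t; eapply Rle_trans; [apply Rmin_l|apply Rmin_r]).
assert (Ht3 : t <= a/C) by (unfold t; apply Rmin_r).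
assert (HtC : t * C <= a).
{ apply (Rmult_le_compat_r C) in Ht3; [|lra]. unfold Rdiv in Ht3. rewrite Rmult_assoc, Rinv_l in Ht3; lra. }
assert (Hat : a * t <= 1/8).
{ assert (a * t * C <= a * a) by nra. assert (8 * (a*a) <= C) by (unfold C; nra). nra. }
assert (Hu : a * t^2 <= 1/16) by nra.
assert (Heu : - (1/16) <= e * t^2 <= 1/16) by (destruct Hea as [Hea|Hea]; rewrite Hea; split; nra).
assert (Hdt : dt e t 0 <> 0).
{ unfold dt, m11, m12, m21, m22.
  replace ((1 - e * (3 * t ^ 2 - 0 ^ 2)) * (1 - e * (t ^ 2 - 3 * 0 ^ 2)) -
    - (e * (-1 - 2 * t * 0)) * - (e * (1 + 2 * t * 0))) with ((1 - 3*(e*t^2))*(1 - e*t^2) + e^2) by ring.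
  assert (0 < e^2) by (destruct Hea as [H|H]; rewrite H; nra). nra. }
exists (t, 0). cbn [fst snd].
split; [rewrite Rabs_pos_eq; lra|].
split; [rewrite Rabs_R0; lra|].
split.
- split; [rewrite detE; auto|]. cbn [fst snd]. split; [lra|].
  rewrite Phi2E. cbn [fst snd]. intro Hc.
  pose proof (H2key e t 0 Hdt) as K. rewrite Hc in K.
  assert (P1 e t 0 = 0 /\ P2 e t 0 = 0) as [Z1 Z2] by (split; nra).
  rewrite Z1, Z2 in Hc. lra.
- apply notlie; auto; [|lra].
  set (u := t^2).
  assert (Hu0 : 0 <= u <= 1) by (unfold u; split; nra).
  assert (Hut : u <= t) by (unfold u; nra).
  pose proof (gb e u a Hu0 (Rlt_le _ _ Ha) Hea) as G.
  set (g := (2*e-1-3*e^2)*(1+u) + (2*e-e^2)*u^2 - e^2*u^3) in *.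
  assert (Hug : Rabs (u * g) <= a).
  { rewrite Rabs_mult, Rabs_pos_eq by lra. apply Rle_trans with (u*C); [|nra].
    apply Rmult_le_compat_l; unfold C; lra. }
  assert (Hr : 2*e + u*g <> 0).
  { intro Hc. replace (u*g) with (-(2*e)) in Hug by lra.
    rewrite Rabs_Ropp, Rabs_mult, Rabs_pos_eq in Hug by lra. fold a in Hug. lra. }
  apply Rmult_integral_contrapositive_currified; [|exact Hr].
  apply Rmult_integral_contrapositive_currified; unfold u in *; nra.
Qed.


Lemma loc_pos (f : R -> R) x : ex_derive f x -> 0 < f x -> locally x (fun t => 0 < f t).
Proof.
intros Hd Hp. apply ex_derive_continuous in Hd.
apply Hd. exists (mkposreal _ Hp). intros z Hz.
unfold ball in Hz; simpl in Hz. unfold AbsRing_ball, abs, minus, plus, opp in Hz; simpl in Hz.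
apply Rabs_lt_between in Hz. lra.
Qed.

Lemma der_div_sqrt (N D : R -> R) x n d : is_derive N x n -> is_derive D x d -> 0 < D x ->
  is_derive (fun t => N t / sqrt (D t)) x (n / sqrt (D x) - N x * d / (2 * sqrt (D x) * D x)).
Proof.
intros HN HD Hp.
assert (Hs : 0 < sqrt (D x)) by (apply sqrt_lt_R0; auto).
assert (Hss : sqrt (D x) * sqrt (D x) = D x) by (apply sqrt_sqrt; lra).
assert (E : is_derive (fun t => N t / sqrt (D t)) x
  (1 * n * / sqrt (D x) + N x * (- (1 * d * / (2 * sqrt (D x))) * / (sqrt (D x) * sqrt (D x))))).
{ auto_derive. { repeat split; try lra; eexists; eauto. }
  replace (Derive (fun x0 => N x0) x) with n by (symmetry; apply is_derive_unique; auto).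
  replace (Derive (fun x0 => D x0) x) with d by (symmetry; apply is_derive_unique; auto). reflexivity. }
replace (n / sqrt (D x) - N x * d / (2 * sqrt (D x) * D x)) with
  (1 * n * / sqrt (D x) + N x * (- (1 * d * / (2 * sqrt (D x))) * / (sqrt (D x) * sqrt (D x)))); auto.
rewrite Hss. field. lra.
Qed.





Definition N1 e x y := (e^2-1)*x + 2*e*y.
Definition N2 e x y := 2*e*x + (1-e^2)*y.
Definition Dp e x y := 4 * e * (e ^ 2 - 1) * x ^ 2 + 16 * e ^ 2 * x * y
  - 4 * e * (e ^ 2 - 1) * y ^ 2 + (e ^ 2 + 1) ^ 2.

Lemma Phi2t_simpl e x y : 0 < 1+2*x*y -> 0 < Dp e x y ->
  Phi2t e (x,y) = (- N1 e x y / sqrt (Dp e x y), N2 e x y / sqrt (Dp e x y)).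
Proof.
intros H1 H2. unfold Phi2t, Gtilde. change (Dtilde e (x,y)) with (Dp e x y).
rewrite sqrt_div_alt by auto.
rewrite sqrt_mult by nra. rewrite sqrt_pow2 by nra.
assert (Hs : 0 < sqrt (2*x*y+1)) by (apply sqrt_lt_R0; lra).
assert (Hr : 0 < sqrt (Dp e x y)) by (apply sqrt_lt_R0; lra).
assert (0 < e^2+1) by nra.
unfold N1, N2; f_equal; field; repeat split; lra.
Qed.

Lemma partb e : e <> 0 ->
  first_integral_on (dom_Phi2t e) H2 (Phi2t e) /\
   lie_symmetry_on (dom_Phi2t e) S2 (Phi2t e).
Proof.
intros He. split.
- intros [x y] [K1 [K2 K3]]. cbn [fst snd] in K1, K2.
  change (Dtilde e (x,y)) with (Dp e x y) in K2.
  rewrite Phi2t_simpl in * by auto. cbn [fst snd] in K3.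
  assert (Hr : 0 < sqrt (Dp e x y)) by (apply sqrt_lt_R0; lra).
  assert (Hrr : sqrt (Dp e x y) * sqrt (Dp e x y) = Dp e x y) by (apply sqrt_sqrt; lra).
  set (r := sqrt (Dp e x y)) in *.
  assert (H4 : r*r - 2 * N1 e x y * N2 e x y <> 0).
  { intro Hc. apply K3.
    replace (1 + 2 * (- N1 e x y / r) * (N2 e x y / r)) with ((r*r - 2 * N1 e x y * N2 e x y) / (r*r)) by (field; lra).
    rewrite Hc. unfold Rdiv; ring. }
  unfold H2. 
  replace ((- N1 e x y / r) ^ 2 + (N2 e x y / r) ^ 2) with ((N1 e x y ^2 + N2 e x y ^2) / (r*r)) by (field; lra).
  replace (1 + 2 * (- N1 e x y / r) * (N2 e x y / r)) with ((r*r - 2 * N1 e x y * N2 e x y) / (r*r)) by (field; lra).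
  replace ((N1 e x y ^ 2 + N2 e x y ^ 2) / (r * r) / ((r * r - 2 * N1 e x y * N2 e x y) / (r * r)))
    with ((N1 e x y ^ 2 + N2 e x y ^ 2) / (r * r - 2 * N1 e x y * N2 e x y)) by (field; lra).
  apply cross; auto; try lra.
  rewrite Hrr. unfold N1, N2, Dp. ring.
- intros [x y] [K1 [K2 K3]]. cbn [fst snd] in K1, K2.
  change (Dtilde e (x,y)) with (Dp e x y) in K2.
  unfold lie_symmetry_at, jac.
  assert (L1 : locally x (fun t => 0 < 1 + 2*t*y /\ 0 < Dp e t y)).
  { apply filter_and; apply loc_pos; auto; unfold Dp; auto_derive; auto. }
  assert (L2 : locally y (fun t => 0 < 1 + 2*x*t /\ 0 < Dp e x t)).
  { apply filter_and; apply loc_pos; auto; unfold Dp; auto_derive; auto. }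
  assert (Kd : 0 < 4 * e * (e ^ 2 - 1) * x ^ 2 + 16 * e ^ 2 * x * y
  - 4 * e * (e ^ 2 - 1) * y ^ 2 + (e ^ 2 + 1) ^ 2) by exact K2.
  assert (Ks : 0 < sqrt (4 * e * (e ^ 2 - 1) * x ^ 2 + 16 * e ^ 2 * x * y
  - 4 * e * (e ^ 2 - 1) * y ^ 2 + (e ^ 2 + 1) ^ 2)) by (apply sqrt_lt_R0; lra).
  assert (E11 : is_derive (fun t => fst (Phi2t e (t,y))) x
     ((-(e^2-1)) / sqrt (Dp e x y) - (- N1 e x y) * (8*e*(e^2-1)*x + 16*e^2*y) / (2 * sqrt (Dp e x y) * Dp e x y))).
  { apply is_derive_ext_loc with (f := fun t => - N1 e t y / sqrt (Dp e t y)).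
    { refine (filter_imp _ _ _ L1); intros t [Ht1 Ht2]; rewrite Phi2t_simpl by auto; reflexivity. }
    apply (der_div_sqrt (fun t => - N1 e t y) (fun t => Dp e t y)).
    - unfold N1, N2; auto_derive; [auto|ring].
    - unfold Dp; auto_derive; [auto|ring].
    - auto. }
  assert (E12 : is_derive (fun t => fst (Phi2t e (x,t))) y
     ((-(2*e)) / sqrt (Dp e x y) - (- N1 e x y) * (16*e^2*x - 8*e*(e^2-1)*y) / (2 * sqrt (Dp e x y) * Dp e x y))).
  { apply is_derive_ext_loc with (f := fun t => - N1 e x t / sqrt (Dp e x t)).
    { refine (filter_imp _ _ _ L2); intros t [Ht1 Ht2]; rewrite Phi2t_simpl by auto; reflexivity. }
    apply (der_div_sqrt (fun t => - N1 e x t) (fun t => Dp e x t)).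
    - unfold N1, N2; auto_derive; [auto|ring].
    - unfold Dp; auto_derive; [auto|ring].
    - auto. }
  assert (E21 : is_derive (fun t => snd (Phi2t e (t,y))) x
     ((2*e) / sqrt (Dp e x y) - (N2 e x y) * (8*e*(e^2-1)*x + 16*e^2*y) / (2 * sqrt (Dp e x y) * Dp e x y))).
  { apply is_derive_ext_loc with (f := fun t => N2 e t y / sqrt (Dp e t y)).
    { refine (filter_imp _ _ _ L1); intros t [Ht1 Ht2]; rewrite Phi2t_simpl by auto; reflexivity. }
    apply (der_div_sqrt (fun t => N2 e t y) (fun t => Dp e t y)).
    - unfold N1, N2; auto_derive; [auto|ring].
    - unfold Dp; auto_derive; [auto|ring].
    - auto. }
  assert (E22 : is_derive (fun t => snd (Phi2t e (x,t))) y
     ((1-e^2) / sqrt (Dp e x y) - (N2 e x y) * (16*e^2*x - 8*e*(e^2-1)*y) / (2 * sqrt (Dp e x y) * Dp e x y))).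
  { apply is_derive_ext_loc with (f := fun t => N2 e x t / sqrt (Dp e x t)).
    { refine (filter_imp _ _ _ L2); intros t [Ht1 Ht2]; rewrite Phi2t_simpl by auto; reflexivity. }
    apply (der_div_sqrt (fun t => N2 e x t) (fun t => Dp e x t)).
    - unfold N1, N2; auto_derive; [auto|ring].
    - unfold Dp; auto_derive; [auto|ring].
    - auto. }
  rewrite (DU (fun t : R => fst (Phi2t e (t,y))) x _ E11), (DU (fun t : R => fst (Phi2t e (x,t))) y _ E12),
    (DU (fun t : R => snd (Phi2t e (t,y))) x _ E21), (DU (fun t : R => snd (Phi2t e (x,t))) y _ E22).
  rewrite Phi2t_simpl by auto.
  assert (Hr : 0 < sqrt (Dp e x y)) by (apply sqrt_lt_R0; lra).
  assert (Hrr : sqrt (Dp e x y) * sqrt (Dp e x y) = Dp e x y) by (apply sqrt_sqrt; lra).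
  set (r := sqrt (Dp e x y)) in *.
  cbv beta iota zeta delta [S2 mat_vec].
  f_equal.
  + apply Rminus_diag_uniq.
    transitivity ((r*r - Dp e x y) * (- ((- N1 e x y)^3 - (- N1 e x y) * (N2 e x y)^2)) / (r*r*r*Dp e x y)).
    * assert (Dp e x y <> 0) by lra. unfold N1, N2, Dp in *. field. split; lra.
    * rewrite Hrr. unfold Rdiv; ring.
  + apply Rminus_diag_uniq.
    transitivity ((r*r - Dp e x y) * (- ((N1 e x y)^2 * N2 e x y - (N2 e x y)^3)) / (r*r*r*Dp e x y)).
    * assert (Dp e x y <> 0) by lra. unfold N1, N2, Dp in *. field. split; lra.
    * rewrite Hrr. unfold Rdiv; ring.
Qed.

Theorem proposition17 :
  forall eps : R, eps <> 0 ->
  (* (a) *)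
  (first_integral_on (dom_Phi2 eps) H2 (Phi2 eps) /\
   (* S_2^* is not a Lie symmetry of Phi_{2*,eps}, not even on any
      neighbourhood of the origin *)
   (forall delta : R, 0 < delta ->
      exists p : pt, Rabs (fst p) < delta /\ Rabs (snd p) < delta /\
        dom_Phi2 eps p /\ ~ lie_symmetry_at S2 (Phi2 eps) p)) /\
  (* (b) *)
  (first_integral_on (dom_Phi2t eps) H2 (Phi2t eps) /\
   lie_symmetry_on (dom_Phi2t eps) S2 (Phi2t eps)).
Proof.
intros e He. split; [split; [apply parta1 | apply parta2; auto] | ].
apply partb; auto.
Qed.
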